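(* Consider the continuous-stage Runge–Kutta–Nyström (csRKN) method with coefficients $(\bar{A}_{\tau,\sigma},\bar{B}_\tau,B_\tau,C_\tau)$ applied to $q''=f(t,q)$. Suppose that for all $\tau,\sigma\in[0,1]$ \begin{align*} C_\tau&=1-C_{1-\tau},\\ \bar{A}_{\tau,\sigma}&=B_{1-\sigma}(1-C_{1-\tau})-\bar{B}_{1-\sigma}+\bar{A}_{1-\tau,1-\sigma},\\ \bar{B}_\tau&=B_{1-\tau}-\bar{B}_{1-\tau},\\ B_\tau&=B_{1-\tau}. \end{align*} Then the csRKN method is symmetric.
   Context: Consider the initial value problem $q''=f(t,q)$, $q(t_0)=q_0$, $q'(t_0)=q'_0$, where $f:\mathbb{R}\times\mathbb{R}^d\to\mathbb{R}^d$ is smooth. Let $\bar{A}_{\tau,\sigma}$ be a (sufficiently regular, e.g. integrable/continuous) real function of $\tau,\sigma\in[0,1]$ and $\bar{B}_\tau,B_\tau,C_\tau$ real functions of $\tau\in[0,1]$. The csRKN method with step size $h$ maps $(q_0,q'_0)$ to $(q_1,q'_1)$ by $$Q_\tau=q_0+hC_\tau q'_0+h^2\int_0^1\bar{A}_{\tau,\sigma}f(t_0+C_\sigma h,Q_\sigma)\,d\sigma,\quad \tau\in[0,1],$$ $$q_1=q_0+hq'_0+h^2\int_0^1\bar{B}_\tau f(t_0+C_\tau h,Q_\tau)\,d\tau,\qquad q'_1=q'_0+h\int_0^1 B_\tau f(t_0+C_\tau h,Q_\tau)\,d\tau,$$ with $t_1=t_0+h$. A one-step method $\Phi_h$ is called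 symmetric if $\Phi_h^*=\Phi_h$, where the adjoint method is $\Phi_h^*=\Phi_{-h}^{-1}$; equivalently, exchanging $h\leftrightarrow -h$, $(q_0,q'_0)\leftrightarrow(q_1,q'_1)$ and $t_0\leftrightarrow t_1$ in the defining equations yields the same method. *)

(* Defs.v *)
From Stdlib Require Import Reals.
Open Scope R_scope.

Definition vec (d : nat) : Type := {i : nat | (i < d)%nat} -> R.

Definition has_integral01 (g : R -> R) (v : R) : Prop :=
  exists pr : Riemann_integrable g 0 1, RiemannInt pr = v.

(* One step of the csRKN method with coefficients (Abar, Bbar, B, C),
   step size h, starting time t0, applied to q'' = f(t,q):
   (q0, p0) is mapped to (q1, p1) (p = q'). *)
Definition csRKN_step (d : nat) (Abar : R -> R -> R) (Bbar B C : R -> R)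
  (f : R -> vec d -> vec d) (h t0 : R) (q0 p0 q1 p1 : vec d) : Prop :=
  exists Q : R -> vec d,
    (forall tau, 0 <= tau <= 1 -> forall i,
       exists I, has_integral01
                   (fun sigma => Abar tau sigma * f (t0 + C sigma * h) (Q sigma) i) I
              /\ Q tau i = q0 i + h * C tau * p0 i + h ^ 2 * I) /\
    (forall i,
       exists I, has_integral01
                   (fun tau => Bbar tau * f (t0 + C tau * h) (Q tau) i) I
              /\ q1 i = q0 i + h * p0 i + h ^ 2 * I) /\
    (forall i,
       exists I, has_integral01
                   (fun tau => B tau * f (t0 + C tau * h) (Q tau) i) I
              /\ p1 i = p0 i + h * I).

(* Symmetry: the adjoint method Phi_{-h}^{-1} coincides with Phi_h, i.e.
   exchanging h <-> -h, (q0,p0) <-> (q1,p1), t0 <-> t1 = t0 + h in the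
   defining relations yields the same method. *)
Definition csRKN_symmetric (d : nat) (Abar : R -> R -> R) (Bbar B C : R -> R)
  (f : R -> vec d -> vec d) : Prop :=
  forall (h t0 : R) (q0 p0 q1 p1 : vec d),
    csRKN_step d Abar Bbar B C f h t0 q0 p0 q1 p1 <->
    csRKN_step d Abar Bbar B C f (- h) (t0 + h) q1 p1 q0 p0.

(* Main.v *)
Require Import Defs.
From Stdlib Require Import Reals Lra.
From Coquelicot Require Import Coquelicot.
Open Scope R_scope.

Lemma hi_to (g : R -> R) v : has_integral01 g v -> is_RInt g 0 1 v.
Proof.
  intros [pr Hp]. rewrite <- Hp, <- RInt_Reals.
  apply (RInt_correct (V:=R_CompleteNormedModule)), ex_RInt_Reals_1; exact pr.
Qed.

Lemma hi_of (g : R -> R) v : is_RInt g 0 1 v -> has_integral01 g v.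
Proof.
  intros H. exists (ex_RInt_Reals_0 _ _ _ (ex_intro _ v H)).
  rewrite <- RInt_Reals. apply is_RInt_unique; exact H.
Qed.

Lemma refl01 (g : R -> R) v : is_RInt g 0 1 v -> is_RInt (fun s => g (1 - s)) 0 1 v.
Proof.
  intros H.
  apply is_RInt_swap in H.
  assert (H1 : is_RInt g (-1 * 0 + 1) (-1 * 1 + 1) (opp v)).
  { replace (-1 * 0 + 1) with 1 by ring. replace (-1 * 1 + 1) with 0 by ring. exact H. }
  apply is_RInt_comp_lin in H1.
  apply (is_RInt_scal _ _ _ (-1)) in H1.
  replace v with (scal (-1) (opp v)).
  - eapply is_RInt_ext; [|exact H1]. intros x _.
    unfold scal; simpl; unfold mult; simpl.
    replace (-1 * x + 1) with (1 - x) by ring. ring.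
  - unfold scal, opp; simpl; unfold mult; simpl. ring.
Qed.

Section S.
Variables (d : nat) (Abar : R -> R -> R) (Bbar B C : R -> R)
  (HC : forall tau, 0 <= tau <= 1 -> C tau = 1 - C (1 - tau))
  (HA : forall tau sigma, 0 <= tau <= 1 -> 0 <= sigma <= 1 ->
          Abar tau sigma = B (1 - sigma) * (1 - C (1 - tau)) - Bbar (1 - sigma)
                           + Abar (1 - tau) (1 - sigma))
  (HBbar : forall tau, 0 <= tau <= 1 -> Bbar tau = B (1 - tau) - Bbar (1 - tau))
  (HB : forall tau, 0 <= tau <= 1 -> B tau = B (1 - tau))
  (f : R -> vec d -> vec d).

Lemma fwd h t0 q0 p0 q1 p1 :
  csRKN_step d Abar Bbar B C f h t0 q0 p0 q1 p1 ->
  csRKN_step d Abar Bbar B C f (- h) (t0 + h) q1 p1 q0 p0.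
Proof.
  intros [Q [HQ [Hq Hp]]].
  assert (Harg : forall x, 0 < x < 1 ->
     f (t0 + h + C x * - h) (Q (1 - x)) = f (t0 + C (1 - x) * h) (Q (1 - x))).
  { intros x Hx. rewrite (HC (1 - x)) by lra.
    replace (1 - (1 - x)) with x by ring. f_equal. ring. }
  exists (fun tau => Q (1 - tau)). split; [|split].
  - intros tau Ht i.
    destruct (HQ (1 - tau) ltac:(lra) i) as [I1 [H1 E1]].
    destruct (Hq i) as [I2 [H2 E2]]. destruct (Hp i) as [I3 [H3 E3]].
    exists (C tau * I3 - I2 + I1). split.
    + apply hi_of.
      apply hi_to, refl01 in H1. apply hi_to, refl01 in H2. apply hi_to, refl01 in H3.
      pose proof (is_RInt_plus _ _ _ _ _ _
                   (is_RInt_minus _ _ _ _ _ _ (is_RInt_scal _ _ _ (C tau) _ H3) H2) H1) as H4.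
      eapply is_RInt_ext; [|exact H4].
      intros x Hx. rewrite Rmin_left in Hx by lra. rewrite Rmax_right in Hx by lra.
      simpl. unfold plus, minus, scal, opp; simpl. unfold mult, plus, opp; simpl.
      rewrite Harg by lra. rewrite (HA tau x) by lra. rewrite <- (HC tau) by lra. ring.
    + rewrite E1, E2, E3. rewrite (HC tau) by lra. ring.
  - intros i. destruct (Hq i) as [I2 [H2 E2]]. destruct (Hp i) as [I3 [H3 E3]].
    exists (I3 - I2). split.
    + apply hi_of.
      apply hi_to, refl01 in H2. apply hi_to, refl01 in H3.
      pose proof (is_RInt_minus _ _ _ _ _ _ H3 H2) as H4.
      eapply is_RInt_ext; [|exact H4].
      intros x Hx. rewrite Rmin_left in Hx by lra. rewrite Rmax_right in Hx by lra.
      unfold minus, plus, opp; simpl.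
      rewrite Harg by lra. rewrite (HBbar x) by lra. ring.
    + rewrite E2, E3. ring.
  - intros i. destruct (Hp i) as [I3 [H3 E3]].
    exists I3. split.
    + apply hi_of. apply hi_to, refl01 in H3.
      eapply is_RInt_ext; [|exact H3].
      intros x Hx. rewrite Rmin_left in Hx by lra. rewrite Rmax_right in Hx by lra.
      simpl. rewrite Harg by lra. rewrite (HB x) by lra. ring.
    + rewrite E3. ring.
Qed.
End S.

Theorem theorem3p2 (d : nat) (Abar : R -> R -> R) (Bbar B C : R -> R)
  (HC : forall tau, 0 <= tau <= 1 -> C tau = 1 - C (1 - tau))
  (HA : forall tau sigma, 0 <= tau <= 1 -> 0 <= sigma <= 1 ->
          Abar tau sigma = B (1 - sigma) * (1 - C (1 - tau)) - Bbar (1 - sigma)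
                           + Abar (1 - tau) (1 - sigma))
  (HBbar : forall tau, 0 <= tau <= 1 -> Bbar tau = B (1 - tau) - Bbar (1 - tau))
  (HB : forall tau, 0 <= tau <= 1 -> B tau = B (1 - tau)) :
  forall f : R -> vec d -> vec d, csRKN_symmetric d Abar Bbar B C f.
Proof.
  intros f h t0 q0 p0 q1 p1. split.
  - apply fwd; assumption.
  - intros H. pose proof (fwd d Abar Bbar B C HC HA HBbar HB f _ _ _ _ _ _ H) as H'.
    rewrite Ropp_involutive in H'.
    replace (t0 + h + - h) with t0 in H' by ring. exact H'.
Qed.
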